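(* Let $j\in\mathbb{N}$. There exist surfaces in $\mathbb{P}^3(\mathbb{C})$ of degree $d=2(j+1)$ with $4(j+1)^2$ singularities of type $A_j$.
   Context: A singularity of type $A_j$ of a surface is a point where it is locally analytically equivalent to $x^{j+1}+y^2+z^2=0$. *)

(* Defs.v *)
From Stdlib Require Import Reals Arith.
From Coquelicot Require Import Coquelicot.

Open Scope C_scope.

Definition C3 := (C * C * C)%type.
Definition C4 := (C * C * C * C)%type.

(* Homogeneous polynomial of degree d in x0,x1,x2,x3, given by its
   coefficients c a b e of the monomial x0^a x1^b x2^e x3^(d-a-b-e)
   (only a+b+e <= d is relevant). *)
Definition hp_eval (d : nat) (c : nat -> nat -> nat -> C) (x : C4) : C :=
  let '(x0, x1, x2, x3) := x in
  sum_n (fun a => sum_n (fun b => sum_n (fun e =>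
     if (a + b + e <=? d)%nat
     then c a b e * pow_n x0 a * pow_n x1 b * pow_n x2 e * pow_n x3 (d - a - b - e)%nat
     else RtoC 0) d) d) d.

Definition hp_nonzero (d : nat) (c : nat -> nat -> nat -> C) : Prop :=
  exists a b e, (a + b + e <= d)%nat /\ c a b e <> RtoC 0.

Definition zero4 : C4 := (RtoC 0, RtoC 0, RtoC 0, RtoC 0).

Definition coord4 (k : nat) (x : C4) : C :=
  let '(x0, x1, x2, x3) := x in
  match k with 0 => x0 | 1 => x1 | 2 => x2 | _ => x3 end.

Definition scal4 (l : C) (x : C4) : C4 :=
  let '(x0, x1, x2, x3) := x in (l * x0, l * x1, l * x2, l * x3).

Definition chart (k : nat) (y : C3) : C4 :=
  let '(y0, y1, y2) := y in
  match k with
  | 0 => (RtoC 1, y0, y1, y2)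
  | 1 => (y0, RtoC 1, y1, y2)
  | 2 => (y0, y1, RtoC 1, y2)
  | _ => (y0, y1, y2, RtoC 1)
  end.

Definition dechart (k : nat) (x : C4) : C3 :=
  let '(x0, x1, x2, x3) := x in
  match k with
  | 0 => (x1, x2, x3)
  | 1 => (x0, x2, x3)
  | 2 => (x0, x1, x3)
  | _ => (x0, x1, x2)
  end.

(* holomorphic on U: complex-differentiable (C-linear Frechet derivative) at
   every point of U *)
Definition holo_on {V : NormedModule C_AbsRing} (f : C3 -> V) (U : C3 -> Prop) : Prop :=
  forall x : C3, U x -> ex_filterdiff (K := C_AbsRing) f (locally x).

Definition A_form (j : nat) (w : C3) : C :=
  let '(w0, w1, w2) := w in pow_n w0 (j + 1) + pow_n w1 2 + pow_n w2 2.

(* The hypersurface germ {f = 0} at q is locally analytically equivalent to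
   the germ {A_form j = 0} at 0: there is a biholomorphism Phi : U -> W of open
   neighbourhoods of q and 0, Phi q = 0, and a nowhere vanishing holomorphic
   unit u on U with f = u * (A_form j o Phi) on U. *)
Definition germ_Aj (j : nat) (f : C3 -> C) (q : C3) : Prop :=
  exists (U W : C3 -> Prop) (Phi Psi : C3 -> C3) (u : C3 -> C),
    open U /\ open W /\ U q /\ Phi q = (RtoC 0, RtoC 0, RtoC 0) /\
    (forall x, U x -> W (Phi x) /\ Psi (Phi x) = x) /\
    (forall w, W w -> U (Psi w) /\ Phi (Psi w) = w) /\
    holo_on Phi U /\ holo_on Psi W /\ holo_on u U /\
    (forall x, U x -> u x <> RtoC 0) /\
    (forall x, U x -> f x = u x * A_form j (Phi x)).

(* The surface {F = 0} in P^3(C), F = hp_eval d c, has a singularity of type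
   A_j at the projective point [p] (p <> 0): in an affine chart x_k = 1 with
   p_k <> 0, the affine equation has an A_j germ at the image of [p]. *)
Definition is_Aj_point (j d : nat) (c : nat -> nat -> nat -> C) (p : C4) : Prop :=
  exists k : nat, (k <= 3)%nat /\ coord4 k p <> RtoC 0 /\
    germ_Aj j (fun y => hp_eval d c (chart k y)) (dechart k (scal4 (/ coord4 k p) p)).

Definition proj_distinct (p q : C4) : Prop :=
  ~ (exists l : C, q = scal4 l p).

(* Main.v *)
Require Import Defs.
From Stdlib Require Import Reals Arith Lia Lra List.
From Coquelicot Require Import Coquelicot.
Open Scope C_scope.

Lemma Cmod_minus_sym (a b : C) : Cmod (a - b) = Cmod (b - a).
Proof. rewrite <- Cmod_opp. f_equal. ring. Qed.

Lemma Cmod_tri_minus (a b : C) : Cmod a - Cmod b <= Cmod (a - b).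
Proof. 
  assert (H := Cmod_triangle (a - b) b).
  replace (a - b + b) with a in H by ring. lra.
Qed.

Lemma continuous_Cmod (z : C) : continuous Cmod z.
Proof.
  destruct z as [a b]. unfold Cmod.
  apply (continuous_comp (fun x : C => (fst x ^ 2 + snd x ^ 2)%R) sqrt); [|apply continuous_sqrt].
  apply (continuous_plus (fun x : C => ((fst x)^2)%R) (fun x : C => ((snd x)^2)%R)).
  - simpl. apply (continuous_mult (fun x : C => fst x) (fun x : C => (fst x * 1)%R)).
    apply continuous_fst.
    apply (continuous_mult (fun x : C => fst x) (fun x : C => 1%R)). apply continuous_fst. apply continuous_const.
  - simpl. apply (continuous_mult (fun x : C => snd x) (fun x : C => (snd x * 1)%R)).
    apply continuous_snd.
    apply (continuous_mult (fun x : C => snd x) (fun x : C => 1%R)). apply continuous_snd. apply continuous_const.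
Qed.

Lemma continuous_Cminus_c (c z : C) : continuous (fun v : C => v - c) z.
Proof.
  apply (continuous_plus (fun v : C => v) (fun _ : C => - c)).
  apply continuous_id. apply continuous_const.
Qed.

Lemma open_Cball (c : C) (e : R) : open (fun z : C => Cmod (z - c) < e).
Proof.
  apply (open_comp (fun z : C => Cmod (z - c)) (fun u : R => u < e)).
  - intros x _. apply (continuous_comp (fun v : C => v - c) Cmod).
    apply continuous_Cminus_c. apply continuous_Cmod.
  - apply open_lt.
Qed.

Lemma locally_Cball (z : C) (e : R) : 0 < e -> locally z (fun v => Cmod (v - z) < e).
Proof.
  intros He. apply (locally_open (fun v => Cmod (v - z) < e)). apply open_Cball.
  auto. replace (z - z) with (RtoC 0) by ring. rewrite Cmod_0. auto.
Qed.

Lemma open_pre {T U : UniformSpace} (A : T -> Prop) (B : U -> Prop) (f : T -> U) :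
  open A -> open B -> (forall x, A x -> continuous f x) ->
  open (fun x => A x /\ B (f x)).
Proof.
  intros HA HB Hc x [Ax Bx].
  apply filter_and. apply HA; auto.
  apply (Hc x Ax). apply HB; auto.
Qed.

Lemma is_derive_Cinv (z : C) : z <> 0 -> is_derive (K := C_AbsRing) (V := AbsRing_NormedModule C_AbsRing) Cinv z (- / (z * z)).
Proof.
  intros Hz. split. apply is_linear_scal_l.
  intros x Hx. apply (@is_filter_lim_locally_unique C_AbsRing (AbsRing_NormedModule C_AbsRing)) in Hx. subst x.
  intros eps.
  assert (Hm : 0 < Cmod z) by (apply Cmod_gt_0; auto).
  set (d := Rmin (Cmod z / 2) (eps * (Cmod z * Cmod z * Cmod z) / 2)).
  assert (Hd : 0 < d). { unfold d. apply Rmin_glb_lt. lra.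
    assert (0 < eps) by apply cond_pos. 
    assert (0 < Cmod z * Cmod z * Cmod z) by (repeat apply Rmult_lt_0_compat; auto). nra. }
  apply locally_C. apply filter_imp with (2 := locally_Cball z d Hd).
  intros y Hy.
  assert (Hy1 : Cmod (y - z) < Cmod z / 2) by (eapply Rlt_le_trans; [apply Hy| apply Rmin_l]).
  assert (Hy2 : Cmod (y - z) <= eps * (Cmod z * Cmod z * Cmod z) / 2) by (left; eapply Rlt_le_trans; [apply Hy| apply Rmin_r]).
  assert (Hyz : Cmod z / 2 < Cmod y).
  { assert (H := Cmod_tri_minus z y). rewrite Cmod_minus_sym in H. lra. }
  assert (Hy0 : y <> RtoC 0). { intros ->. rewrite Cmod_0 in Hyz. lra. }
  change (Cmod (/ y - / z - (y - z) * (- / (z * z))) <= eps * Cmod (y - z)).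
  replace (/ y - / z - (y - z) * (- / (z * z))) with ((y - z) * (y - z) / (y * (z * z))).
  2:{ field. split; auto. }
  unfold Cdiv. rewrite !Cmod_mult, Cmod_inv, !Cmod_mult.
  2:{ apply Cmult_neq_0; auto. apply Cmult_neq_0; auto. }
  assert (0 <= Cmod (y - z)) by apply Cmod_ge_0.
  assert (0 < eps) by apply cond_pos.
  apply Rle_trans with ((Cmod (y - z) * (eps * (Cmod z * Cmod z * Cmod z) / 2) * / (Cmod z / 2 * (Cmod z * Cmod z)))%R).
  - apply Rmult_le_compat.
    + apply Rmult_le_pos; auto.
    + left. apply Rinv_0_lt_compat. apply Rmult_lt_0_compat; nra.
    + apply Rmult_le_compat_l; auto.
    + apply Rinv_le_contravar. apply Rmult_lt_0_compat; nra.
      apply Rmult_le_compat_r. nra. lra.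
  - right. field. lra.
Qed.

Lemma inv_deriv (f g : C -> C) (b l : C) :
  continuous f b -> locally b (fun v => g (f v) = v) ->
  is_derive (K := C_AbsRing) (V := AbsRing_NormedModule C_AbsRing) g (f b) l -> l <> 0 ->
  is_derive (K := C_AbsRing) (V := AbsRing_NormedModule C_AbsRing) f b (/ l).
Proof.
  intros Hc Hgf [_ Hg] Hl. split. apply is_linear_scal_l.
  intros x Hx. apply (@is_filter_lim_locally_unique C_AbsRing (AbsRing_NormedModule C_AbsRing)) in Hx. subst x.
  intros eps.
  assert (Hm : 0 < Cmod l) by (apply Cmod_gt_0; auto).
  assert (He : 0 < eps) by apply cond_pos.
  assert (He' : 0 < Rmin (Cmod l / 2) (eps * (Cmod l * Cmod l) / 2)).
  { apply Rmin_glb_lt. lra. assert (0 < Cmod l * Cmod l) by nra. nra. }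
  specialize (Hg (f b) (fun P H => H) (mkposreal _ He')).
  simpl in Hg.
  apply locally_C in Hg.
  specialize (Hc _ Hg). simpl in Hc. unfold filtermap in Hc.
  apply locally_C.
  assert (Hb : g (f b) = b) by (apply locally_singleton in Hgf; auto).
  apply filter_imp with (2 := filter_and _ _ Hc Hgf).
  intros v [Hv Hgv].
  change (Cmod (g (f v) - g (f b) - (f v - f b) * l) <= Rmin (Cmod l / 2) (eps * (Cmod l * Cmod l) / 2) * Cmod (f v - f b)) in Hv.
  change (Cmod (f v - f b - (v - b) * / l) <= eps * Cmod (v - b)).
  rewrite Hgv, Hb in Hv.
  set (d := f v - f b) in *. set (h := v - b) in *.
  set (E := h - d * l) in *.
  assert (Hd1 : (Cmod d * Cmod l <= Cmod h + Cmod E)%R).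
  { rewrite <- Cmod_mult. replace (d * l) with (h - E) by (unfold E; ring).
    eapply Rle_trans. apply Cmod_triangle. rewrite Cmod_opp. lra. }
  assert (HE1 : (Cmod E <= Cmod l / 2 * Cmod d)%R).
  { eapply Rle_trans. apply Hv. apply Rmult_le_compat_r. apply Cmod_ge_0. apply Rmin_l. }
  assert (HE2 : (Cmod E <= eps * (Cmod l * Cmod l) / 2 * Cmod d)%R).
  { eapply Rle_trans. apply Hv. apply Rmult_le_compat_r. apply Cmod_ge_0. apply Rmin_r. }
  assert (Hd2 : (Cmod d * Cmod l <= 2 * Cmod h)%R) by nra.
  replace (d - h * / l) with (- (E / l)) by (unfold E; field; auto).
  rewrite Cmod_opp. unfold Cdiv. rewrite Cmod_mult, Cmod_inv by auto.
  apply Rmult_le_reg_r with (Cmod l). auto.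
  rewrite Rmult_assoc, Rinv_l by lra. rewrite Rmult_1_r.
  assert (0 <= Cmod d) by apply Cmod_ge_0.
  assert (0 <= Cmod h) by apply Cmod_ge_0.
  apply Rle_trans with (eps * (Cmod l * Cmod l) / 2 * Cmod d)%R. auto.
  assert (H3 : (0 <= eps * Cmod l / 2)%R) by nra.
  assert (H4 := Rmult_le_compat_l _ _ _ H3 Hd2).
  nra.
Qed.

Notation CK := (AbsRing_NormedModule C_AbsRing).

Lemma ex_fd_CK {U : NormedModule C_AbsRing} (f : U -> C) F :
  @ex_filterdiff C_AbsRing _ CK f F -> @ex_filterdiff C_AbsRing _ C_NormedModule f F.
Proof. intros [l [[H1 H2 H3] H4]]. exists l. split. split. exact H1. exact H2. exact H3. exact H4. Qed.
Lemma ex_fd_KC {U : NormedModule C_AbsRing} (f : U -> C) F :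
  @ex_filterdiff C_AbsRing _ C_NormedModule f F -> @ex_filterdiff C_AbsRing _ CK f F.
Proof. intros [l [[H1 H2 H3] H4]]. exists l. split. split. exact H1. exact H2. exact H3. exact H4. Qed.

Definition hol {U : NormedModule C_AbsRing} (f : U -> C) (x : U) :=
  @ex_filterdiff C_AbsRing U CK f (locally x).

Lemma Ccomm : forall n m : C_AbsRing, mult n m = mult m n.
Proof. intros. apply Cmult_comm. Qed.

Section H.
Context {U : NormedModule C_AbsRing}.

Lemma hol_const (c : C) (x : U) : hol (fun _ => c) x.
Proof. apply ex_filterdiff_const. Qed.

Lemma hol_plus (f g : U -> C) x : hol f x -> hol g x -> hol (fun v => f v + g v) x.
Proof. intros. unfold hol. apply (ex_filterdiff_plus_fct (F := locally x) (V := CK) f g); auto. Qed.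

Lemma hol_opp (f : U -> C) x : hol f x -> hol (fun v => - f v) x.
Proof. intros. unfold hol. apply (ex_filterdiff_opp_fct (F := locally x) (V := CK) f); auto. Qed.

Lemma hol_minus (f g : U -> C) x : hol f x -> hol g x -> hol (fun v => f v - g v) x.
Proof. intros. apply hol_plus; auto. apply hol_opp; auto. Qed.

Lemma hol_mult (f g : U -> C) x : hol f x -> hol g x -> hol (fun v => f v * g v) x.
Proof. intros. apply (ex_filterdiff_mult_fct f g x Ccomm); auto. Qed.

Lemma hol_comp (f : U -> C) (g : C -> C) x :
  hol f x -> ex_derive (K := C_AbsRing) (V := CK) g (f x) -> hol (fun v => g (f v)) x.
Proof.
  intros Hf Hg. apply (ex_filterdiff_comp' (V := CK) (W := CK) f g x Hf).
  apply ex_derive_filterdiff. auto.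
Qed.

Lemma hol_pow (f : U -> C) n x : hol f x -> hol (fun v => pow_n (f v) n) x.
Proof.
  intros Hf. apply (hol_comp f (fun y => pow_n y n) x Hf).
  eexists. apply (filterdiff_pow_n (K := C_AbsRing) (f x) n Ccomm).
Qed.

Lemma hol_inv (f : U -> C) x : hol f x -> f x <> 0 -> hol (fun v => / f v) x.
Proof.
  intros Hf H0. apply (hol_comp f Cinv x Hf).
  eexists. apply is_derive_Cinv. auto.
Qed.

Lemma hol_div (f g : U -> C) x : hol f x -> hol g x -> g x <> 0 -> hol (fun v => f v / g v) x.
Proof. intros. apply hol_mult; auto. apply hol_inv; auto. Qed.

Lemma hol_ext (f g : U -> C) x : (forall v, f v = g v) -> hol f x -> hol g x.
Proof. intros H. apply ex_filterdiff_ext; auto. Qed.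

Lemma hol_ext_loc (f g : U -> C) x : locally x (fun v => f v = g v) -> hol f x -> hol g x.
Proof. intros H. apply ex_filterdiff_ext_locally; auto. Qed.
End H.

Lemma hol_p0 (x : C3) : hol (fun v : C3 => fst (fst v)) x.
Proof. apply ex_fd_KC. apply ex_filterdiff_linear. apply (is_linear_comp (fun t : C3 => fst t) (fun t : C * C => fst t)); apply is_linear_fst. Qed.
Lemma hol_p1 (x : C3) : hol (fun v : C3 => snd (fst v)) x.
Proof. apply ex_fd_KC. apply ex_filterdiff_linear. apply (is_linear_comp (fun t : C3 => fst t) (fun t : C * C => snd t)). apply is_linear_fst. apply is_linear_snd. Qed.
Lemma hol_p2 (x : C3) : hol (fun v : C3 => snd v) x.
Proof. apply ex_fd_KC. apply ex_filterdiff_linear. apply is_linear_snd. Qed.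

Lemma ex_fd_pair {K : AbsRing} {T U V : NormedModule K} (f : T -> U) (g : T -> V) x :
  ex_filterdiff f (locally x) -> ex_filterdiff g (locally x) ->
  ex_filterdiff (fun v => (f v, g v)) (locally x).
Proof.
  intros Hf Hg. apply (ex_filterdiff_comp'_2 f g (fun a b => (a, b)) x Hf Hg).
  apply ex_filterdiff_linear. apply is_linear_prod. apply is_linear_fst. apply is_linear_snd.
Qed.

Lemma hol_triple (f0 f1 f2 : C3 -> C) (x : C3) :
  hol f0 x -> hol f1 x -> hol f2 x ->
  ex_filterdiff (K := C_AbsRing) (V := prod_NormedModule C_AbsRing (prod_NormedModule C_AbsRing C_NormedModule C_NormedModule) C_NormedModule) (fun v => (f0 v, f1 v, f2 v)) (locally x).
Proof.
  intros H0 H1 H2.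
  apply (ex_fd_pair (K := C_AbsRing) (T := prod_NormedModule C_AbsRing (prod_NormedModule C_AbsRing C_NormedModule C_NormedModule) C_NormedModule) (U := prod_NormedModule C_AbsRing C_NormedModule C_NormedModule) (V := C_NormedModule) (fun v => (f0 v, f1 v)) f2 x).
  apply (ex_fd_pair (K := C_AbsRing) (U := C_NormedModule) (V := C_NormedModule) f0 f1 x).
  all: apply ex_fd_CK; auto.
Qed.

Lemma pow_n_Cpow (x : C) n : pow_n x n = Cpow x n.
Proof. induction n; simpl; try rewrite IHn; auto. Qed.

Lemma pow_n_mult (a b : C) n : pow_n (a * b) n = pow_n a n * pow_n b n.
Proof. rewrite !pow_n_Cpow. apply Cpow_mult_l. Qed.

Definition cis (t : R) : C := (cos t, sin t).

Lemma cis_mult a b : cis a * cis b = cis (a + b).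
Proof. unfold cis, Cmult. simpl. rewrite cos_plus, sin_plus. f_equal; ring. Qed.

Lemma cis_pow a n : pow_n (cis a) n = cis (INR n * a).
Proof.
  induction n.
  - simpl. unfold cis. rewrite Rmult_0_l, cos_0, sin_0. reflexivity.
  - change (pow_n (cis a) (S n)) with (cis a * pow_n (cis a) n). rewrite IHn, cis_mult.
    f_equal. rewrite S_INR. ring.
Qed.

Lemma RC_cis (K t : R) : RtoC K * cis t = (K * cos t, K * sin t)%R.
Proof. unfold RtoC, cis, Cmult. simpl. f_equal; ring. Qed.

Lemma pow_n_RtoC (K : R) n : pow_n (RtoC K) n = RtoC (K ^ n).
Proof. rewrite pow_n_Cpow. symmetry. apply RtoC_pow. Qed.

Lemma polar (v : C) : (0 < fst v)%R -> v = RtoC (Cmod v) * cis (atan (snd v / fst v)).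
Proof.
  destruct v as [a b]. simpl. intros Ha.
  rewrite RC_cis, cos_atan, sin_atan. unfold Cmod. simpl.
  set (t := (b / a)%R).
  assert (Ha0 : a <> 0%R) by (apply Rgt_not_eq; lra).
  assert (Ht : (a * (a * 1) + b * (b * 1) = a * a * (1 + t²))%R) by (unfold t, Rsqr; field; auto).
  assert (Hs : 0 < sqrt (1 + t²)) by (apply sqrt_lt_R0; assert (0 <= t²) by apply Rle_0_sqr; lra).
  rewrite Ht, sqrt_mult, sqrt_square by (try apply Rle_0_sqr; nra).
  assert (Hs0 : sqrt (1 + t²) <> 0%R) by (apply Rgt_not_eq; lra).
  f_equal; [field|unfold t; field]; auto.
Qed.

Lemma cis_mod (K t : R) : (0 <= K)%R -> Cmod (RtoC K * cis t) = K.
Proof.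
  intros HK. rewrite Cmod_mult, Cmod_R, Rabs_pos_eq by auto. unfold cis, Cmod. simpl.
  replace (cos t * (cos t * 1) + sin t * (sin t * 1))%R with 1%R. rewrite sqrt_1. ring.
  assert (H := sin2_cos2 t). unfold Rsqr in H. lra.
Qed.

Definition rootm (m : nat) (v : C) : C :=
  RtoC (exp (ln (Cmod v) * / INR m)) * cis (atan (snd v / fst v) * / INR m).

Lemma exp_pow_n (c : R) n : (exp c ^ n = exp (INR n * c))%R.
Proof.
  induction n. simpl. rewrite Rmult_0_l, exp_0. auto.
  rewrite <- tech_pow_Rmult, IHn, <- exp_plus, S_INR. f_equal. ring.
Qed.

Lemma Cmod_pos_re (v : C) : (0 < fst v)%R -> (0 < Cmod v)%R.
Proof. intros H. apply Cmod_gt_0. intros ->. simpl in H. lra. Qed.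

Lemma rootm_pow m v : (1 <= m)%nat -> (0 < fst v)%R -> pow_n (rootm m v) m = v.
Proof.
  intros Hm Hv. unfold rootm.
  assert (HmR : INR m <> 0%R) by (apply not_0_INR; lia).
  rewrite pow_n_mult, pow_n_RtoC, cis_pow, exp_pow_n.
  replace (INR m * (ln (Cmod v) * / INR m))%R with (ln (Cmod v)) by (field; auto).
  replace (INR m * (atan (snd v / fst v) * / INR m))%R with (atan (snd v / fst v)) by (field; auto).
  rewrite exp_ln by (apply Cmod_pos_re; auto).
  symmetry. apply polar. auto.
Qed.

Definition eps_root (m : nat) : R := Rmin (1/2) (tan (PI / (4 * INR m)) / 4).

Lemma tanpos m : (1 <= m)%nat -> (0 < tan (PI / (4 * INR m)))%R.
Proof.
  intros Hm. assert (1 <= INR m)%R by (apply (le_INR 1); auto).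
  assert (PI > 0) by apply PI_RGT_0.
  apply tan_gt_0. apply Rdiv_lt_0_compat; lra.
  apply Rmult_lt_reg_r with (4 * INR m)%R. lra.
  unfold Rdiv. rewrite Rmult_assoc, Rinv_l by lra. nra.
Qed.

Lemma eps_root_pos m : (1 <= m)%nat -> (0 < eps_root m)%R.
Proof. intros Hm. unfold eps_root. apply Rmin_glb_lt. lra. assert (H := tanpos m Hm). lra. Qed.

Lemma abs_re_le (z : C) : (Rabs (fst z) <= Cmod z)%R.
Proof. eapply Rle_trans. 2: apply Rmax_Cmod. apply Rmax_l. Qed.
Lemma abs_im_le (z : C) : (Rabs (snd z) <= Cmod z)%R.
Proof. eapply Rle_trans. 2: apply Rmax_Cmod. apply Rmax_r. Qed.

Lemma rootm_pow_inv m y : (1 <= m)%nat -> (Cmod (y - 1) < eps_root m)%R -> rootm m (pow_n y m) = y.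
Proof.
  intros Hm Hy.
  assert (HmR1 : (1 <= INR m)%R) by (apply (le_INR 1); auto).
  assert (HmR : INR m <> 0%R) by lra.
  assert (HPI : PI > 0) by apply PI_RGT_0.
  assert (Hre : (Rabs (fst y - 1) < 1/2)%R).
  { eapply Rle_lt_trans. 2: eapply Rlt_le_trans; [apply Hy| apply Rmin_l].
    replace (fst y - 1)%R with (fst (y - 1)) by (simpl; ring). apply abs_re_le. }
  assert (Him : (Rabs (snd y) < tan (PI / (4 * INR m)) / 4)%R).
  { eapply Rle_lt_trans. 2: eapply Rlt_le_trans; [apply Hy| apply Rmin_r].
    replace (snd y) with (snd (y - 1)) by (simpl; ring). apply abs_im_le. }
  assert (Ha : (1/2 < fst y)%R) by (apply Rabs_def2 in Hre; lra).
  set (T := tan (PI / (4 * INR m))) in *.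
  assert (HT : (0 < T)%R) by (apply tanpos; auto).
  assert (Hq : (Rabs (snd y / fst y) < T)%R).
  { unfold Rdiv. rewrite Rabs_mult, Rabs_inv, (Rabs_pos_eq (fst y)) by lra.
    apply Rmult_lt_reg_r with (fst y). lra. rewrite Rmult_assoc, Rinv_l, Rmult_1_r by lra.
    assert (0 <= Rabs (snd y))%R by apply Rabs_pos. nra. }
  set (phi := atan (snd y / fst y)).
  assert (Hb4 : (PI / (4 * INR m) < PI / 2)%R).
  { apply Rmult_lt_reg_r with (4 * INR m)%R. lra. unfold Rdiv.
    rewrite Rmult_assoc, Rinv_l by lra. nra. }
  assert (Hb0 : (0 < PI / (4 * INR m))%R) by (apply Rdiv_lt_0_compat; lra).
  assert (Hphi : (Rabs phi < PI / (4 * INR m))%R).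
  { apply Rabs_def1.
    - unfold phi. rewrite <- (atan_tan (PI / (4 * INR m))) by lra. apply atan_increasing.
      apply Rabs_def2 in Hq. fold T. lra.
    - unfold phi. rewrite <- (atan_tan (PI / (4 * INR m))) by lra. rewrite <- atan_opp.
      apply atan_increasing. apply Rabs_def2 in Hq. fold T. lra. }
  assert (Hmphi : (Rabs (INR m * phi) < PI / 4)%R).
  { rewrite Rabs_mult, Rabs_pos_eq by lra.
    apply Rlt_le_trans with (INR m * (PI / (4 * INR m)))%R. apply Rmult_lt_compat_l; lra.
    right. field. lra. }
  apply Rabs_def2 in Hmphi.
  assert (Hcos : (0 < cos (INR m * phi))%R) by (apply cos_gt_0; lra).
  set (K := Cmod y).
  assert (HK : (0 < K)%R) by (apply Cmod_pos_re; lra).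
  assert (Hy' : y = RtoC K * cis phi) by (apply polar; lra).
  rewrite Hy' at 1.
  rewrite pow_n_mult, pow_n_RtoC, cis_pow.
  unfold rootm. rewrite cis_mod by (apply pow_le; lra).
  simpl fst. simpl snd.
  replace ((K ^ m * sin (INR m * phi) + 0 * cos (INR m * phi)) / (K ^ m * cos (INR m * phi) - 0 * sin (INR m * phi)))%R with (tan (INR m * phi)).
  2:{ unfold tan. field. split. apply Rgt_not_eq; lra. apply pow_nonzero. apply Rgt_not_eq; lra. }
  rewrite atan_tan by lra.
  rewrite ln_pow by auto.
  replace (INR m * ln K * / INR m)%R with (ln K) by (field; auto).
  replace (INR m * phi * / INR m)%R with phi by (field; auto).
  rewrite exp_ln by auto. auto.
Qed.

Lemma continuous_pairR (f g : C -> R) (v : C) :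
  continuous f v -> continuous g v -> continuous (fun w : C => (f w, g w) : C) v.
Proof.
  intros Hf Hg.
  apply (continuous_comp_2 (X := C_UniformSpace) f g (fun a b => (a, b) : C) v Hf Hg).
  apply (continuous_ext (fun x => x)). intros [a b]; reflexivity. apply continuous_id.
Qed.

Lemma continuous_rmul (f g : C -> R) (v : C) :
  continuous f v -> continuous g v -> continuous (fun w => (f w * g w)%R) v.
Proof. intros. apply (continuous_mult (K := R_AbsRing) f g); auto. Qed.

Lemma continuous_rootm m v : (0 < fst v)%R -> continuous (rootm m) v.
Proof.
  intros Hv.
  assert (Hfst : continuous (fun w : C => fst w) v) by (destruct v; apply continuous_fst).
  assert (Hsnd : continuous (fun w : C => snd w) v) by (destruct v; apply continuous_snd).
  assert (HE : continuous (fun w => exp (ln (Cmod w) * / INR m)) v).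
  { apply (continuous_comp (fun w => ln (Cmod w) * / INR m)%R exp); [|apply continuous_exp].
    apply continuous_rmul; [|apply continuous_const].
    apply (continuous_comp Cmod ln). apply continuous_Cmod. apply continuous_ln. apply Cmod_pos_re; auto. }
  assert (HP : continuous (fun w => atan (snd w / fst w) * / INR m)%R v).
  { apply continuous_rmul; [|apply continuous_const].
    apply (continuous_comp (fun w => snd w / fst w)%R atan); [|apply continuous_atan].
    apply continuous_rmul; auto.
    apply (continuous_comp (fun w : C => fst w) Rinv); auto. apply continuous_Rinv. apply Rgt_not_eq; auto. }
  apply (continuous_ext (fun w => (exp (ln (Cmod w) * / INR m) * cos (atan (snd w / fst w) * / INR m),
                                    exp (ln (Cmod w) * / INR m) * sin (atan (snd w / fst w) * / INR m))%R : C)).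
  { intros w. unfold rootm. rewrite RC_cis. reflexivity. }
  apply continuous_pairR; apply continuous_rmul; auto.
  apply (continuous_comp _ cos); auto. apply continuous_cos.
  apply (continuous_comp _ sin); auto. apply continuous_sin.
Qed.

Lemma open_re_pos : open (fun w : C => (0 < fst w)%R).
Proof.
  apply (open_comp (fun w : C => fst w) (fun u => 0 < u)%R).
  intros [a b] _. apply continuous_fst. apply open_gt.
Qed.

Lemma nat_to_ring_C n : nat_to_ring (K := C_Ring) n = RtoC (INR n).
Proof.
  induction n. rewrite nat_to_ring_O. reflexivity.
  rewrite nat_to_ring_Sn, IHn, S_INR. change (RtoC (INR n) + 1 = RtoC (INR n + 1)).
  rewrite RtoC_plus. reflexivity.
Qed.

Lemma pow_n_nz (x : C) n : x <> 0 -> pow_n x n <> RtoC 0.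
Proof. intros H. rewrite pow_n_Cpow. apply Cpow_nz. auto. Qed.

Lemma rootm_nz m v : rootm m v <> 0.
Proof.
  unfold rootm. intros H. apply (f_equal Cmod) in H. rewrite cis_mod in H.
  rewrite Cmod_0 in H. assert (H1 := exp_pos (ln (Cmod v) * / INR m)). lra.
  left. apply exp_pos.
Qed.

Lemma rootm_derive m v : (1 <= m)%nat -> (0 < fst v)%R -> ex_derive (K := C_AbsRing) (V := CK) (rootm m) v.
Proof.
  intros Hm Hv.
  set (l := mult (nat_to_ring (K := C_AbsRing) m) (pow_n (rootm m v) (pred m))).
  exists (/ l).
  apply (inv_deriv (rootm m) (fun y => pow_n y m) v l).
  - apply continuous_rootm; auto.
  - apply (locally_open (fun w : C => (0 < fst w)%R)). apply open_re_pos.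
    intros w Hw. apply rootm_pow; auto. auto.
  - apply (filterdiff_pow_n (K := C_AbsRing) (rootm m v) m Ccomm).
  - unfold l. apply Cmult_neq_0.
    + change (nat_to_ring (K := C_Ring) m <> RtoC 0). rewrite nat_to_ring_C. intros H.
      apply RtoC_inj in H. apply (not_0_INR m). lia. auto.
    + apply pow_n_nz. apply rootm_nz.
Qed.

Lemma RtoC_nz (r : R) : r <> 0%R -> RtoC r <> 0.
Proof. intros H H1. unfold RtoC in H1. injection H1. auto. Qed.
Ltac Cnz := apply RtoC_nz; lra.

Lemma Ci2 : Ci * Ci = - (1).
Proof. unfold Ci, Cmult, Copp, RtoC. simpl. f_equal; ring. Qed.

Lemma pow2C (w : C) : pow_n w 2 = w * w.
Proof. change (w * (w * 1) = w * w). ring. Qed.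

Lemma Pcomb (a b : C) : (a + b) / 2 + Ci * (- Ci * (a - b) / 2) = a.
Proof.
  transitivity ((a + b) / 2 - (Ci * Ci) * (a - b) / 2).
  field; try Cnz. rewrite Ci2. field; try Cnz.
Qed.
Lemma Qcomb (a b : C) : (a + b) / 2 - Ci * (- Ci * (a - b) / 2) = b.
Proof.
  transitivity ((a + b) / 2 + (Ci * Ci) * (a - b) / 2).
  field; try Cnz. rewrite Ci2. field; try Cnz.
Qed.
Lemma Scomb (a b : C) : pow_n ((a + b) / 2) 2 + pow_n (- Ci * (a - b) / 2) 2 = a * b.
Proof.
  rewrite !pow2C.
  transitivity ((a + b) / 2 * ((a + b) / 2) + (Ci * Ci) * ((a - b) / 2 * ((a - b) / 2))).
  field; try Cnz. rewrite Ci2. field; try Cnz.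
Qed.
Lemma W1comb (w1 w2 : C) : ((w1 + Ci * w2) + (w1 - Ci * w2)) / 2 = w1.
Proof. field; try Cnz. Qed.
Lemma W2comb (w1 w2 : C) : - Ci * ((w1 + Ci * w2) - (w1 - Ci * w2)) / 2 = w2.
Proof.
  transitivity (- (Ci * Ci) * w2). field; try Cnz.
  rewrite Ci2. ring.
Qed.

Lemma Cball_nz (z c : C) : Cmod (z - c) < Cmod c -> z <> 0.
Proof. intros H ->. replace (0 - c) with (- c) in H by ring. rewrite Cmod_opp in H. lra. Qed.

Lemma Cmod_lt1_re (z : C) : Cmod (z - 0) < 1 -> (0 < fst ((1 + z)%C))%R.
Proof.
  intros H. replace (z - 0) with z in H by ring. simpl.
  assert (H1 := abs_re_le z).
  assert (H2 : (Rabs (fst z) < 1)%R) by lra. apply Rabs_def2 in H2. lra.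
Qed.

Lemma cont_hol (g : C3 -> C) (v : C3) : hol g v -> continuous g v.
Proof.
  intros H. apply filterdiff_continuous in H.
  intros P HP. apply locally_C in HP. apply H. auto.
Qed.

Lemma open_cond (A : C3 -> Prop) (g : C3 -> C) (c : C) (e : R) :
  open A -> (forall v, A v -> hol g v) -> open (fun v => A v /\ Cmod (g v - c) < e).
Proof.
  intros HA Hg. apply (open_pre A (fun z => Cmod (z - c) < e) g HA).
  apply open_Cball. intros v Hv. apply cont_hol. auto.
Qed.

Ltac hol_step :=
  match goal with
  | |- hol (fun v => Cplus (@?f v) (@?g v)) _ => apply (hol_plus f g)
  | |- hol (fun v => Cminus (@?f v) (@?g v)) _ => apply (hol_minus f g)
  | |- hol (fun v => Copp (@?f v)) _ => apply (hol_opp f)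
  | |- hol (fun v => Cdiv (@?f v) (@?g v)) _ => apply (hol_div f g)
  | |- hol (fun v => Cmult (@?f v) (@?g v)) _ => apply (hol_mult f g)
  | |- hol (fun v => pow_n (@?f v) ?n) _ => apply (hol_pow f n)
  | |- hol (fun v => fst (fst v)) _ => apply hol_p0
  | |- hol (fun v => snd (fst v)) _ => apply hol_p1
  | |- hol (fun v => snd v) _ => apply hol_p2
  | |- hol (fun v => ?c) ?x => exact (hol_const c x)
  end.
Ltac hol_tac := repeat hol_step.

Section Germ.
Variables (m : nat) (beta gamma lam mu : C).
Hypotheses (Hm : (1 <= m)%nat) (Hb : pow_n beta m = RtoC 1) (Hg : pow_n gamma m = RtoC 1)
  (Hlm1 : lam + mu = 1) (Hlm2 : lam * mu = 1) (Hlm3 : mu - lam <> 0).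

Definition hfun (v : C3) : C :=
  let X := pow_n (fst (fst v)) m in
  let Y := pow_n (snd (fst v)) m in
  let Z := pow_n (snd v) m in
  -2 * (X * X + Y * Y + Z * Z + 1) + 2 * (X * Y + X * Z + X + Y * Z + Y + Z).

Definition Xf (v : C3) := pow_n (fst (fst v)) m.
Definition sf (v : C3) := pow_n (snd (fst v)) m - 1.
Definition tf (v : C3) := pow_n (snd v) m - 1.
Definition Df (v : C3) := 3 + sf v + tf v - Xf v.
Definition Pf (v : C3) := - (sf v - lam * tf v) / Df v.
Definition Qf (v : C3) := sf v - mu * tf v.
Definition Phi (v : C3) : C3 := (fst (fst v), (Pf v + Qf v) / 2, - Ci * (Pf v - Qf v) / 2).

Definition Pw (w : C3) := snd (fst w) + Ci * snd w.
Definition Qw (w : C3) := snd (fst w) - Ci * snd w.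
Definition Dlw (w : C3) := (mu - lam) + Pw w * (1 + mu).
Definition tw (w : C3) := (- Pw w * (3 - pow_n (fst (fst w)) m) - (1 + Pw w) * Qw w) / Dlw w.
Definition sw (w : C3) := Qw w + mu * tw w.
Definition Dw (w : C3) := 3 + sw w + tw w - pow_n (fst (fst w)) m.
Definition Psi (w : C3) : C3 := (fst (fst w), beta * rootm m (1 + sw w), gamma * rootm m (1 + tw w)).

Definition uf (v : C3) := 2 * Df v.

Definition U0 (v : C3) : Prop :=
  (((True /\ Cmod (Df v - 3) < 1) /\ Cmod (Pf v * (1 + mu) - 0) < Cmod (mu - lam))
    /\ Cmod (snd (fst v) / beta - 1) < eps_root m) /\ Cmod (snd v / gamma - 1) < eps_root m.

Definition W0 (w : C3) : Prop :=
  (((True /\ Cmod (Dlw w - (mu - lam)) < Cmod (mu - lam)) /\ Cmod (sw w - 0) < 1)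
    /\ Cmod (tw w - 0) < 1) /\ Cmod (Dw w - 3) < 1.

Lemma beta_nz : beta <> 0.
Proof. intros H. rewrite H in Hb. destruct m. lia. simpl in Hb. rewrite Cmult_0_l in Hb. 
  apply (RtoC_nz 1%R). lra. auto. Qed.
Lemma gamma_nz : gamma <> 0.
Proof. intros H. rewrite H in Hg. destruct m. lia. simpl in Hg. rewrite Cmult_0_l in Hg. 
  apply (RtoC_nz 1%R). lra. auto. Qed.

Lemma U0_D v : U0 v -> Df v <> 0.
Proof. intros [[[[_ H] _] _] _]. apply (Cball_nz _ 3). replace (Cmod 3) with 3%R. lra.
  rewrite Cmod_R, Rabs_pos_eq; lra. Qed.

Lemma hfun_eq v : hfun v = 2 * Xf v * Df v - 2 * (sf v * sf v - sf v * tf v + tf v * tf v).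
Proof. unfold hfun, Df, sf, tf. unfold Xf. cbv zeta. generalize (pow_n (fst (fst v)) m) (pow_n (snd (fst v)) m) (pow_n (snd v) m). intros X Y Z. ring. Qed.

Lemma factor_st (s t : C) : (s - lam * t) * (s - mu * t) = s * s - s * t + t * t.
Proof.
  transitivity (s * s - (lam + mu) * s * t + (lam * mu) * t * t). ring.
  rewrite Hlm1, Hlm2. ring.
Qed.

Lemma I3 v : U0 v -> hfun v = uf v * A_form (pred m) (Phi v).
Proof.
  intros HU. assert (HD := U0_D v HU).
  destruct v as [[x y] z]. unfold A_form, Phi. simpl fst. simpl snd.
  replace (pred m + 1)%nat with m by lia.
  rewrite <- Cplus_assoc, Scomb. rewrite hfun_eq. unfold uf, Pf, Qf.
  rewrite <- factor_st. change (pow_n x m) with (Xf (x, y, z)).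
  revert HD. generalize (Xf (x, y, z)) (sf (x, y, z)) (tf (x, y, z)) (Df (x, y, z)).
  intros X s t D HD. field. auto.
Qed.

Lemma alg_t (X s t P Q D Dl : C) : D = 3 + s + t - X -> P * D = - (s - lam * t) -> Q = s - mu * t ->
  Dl = (mu - lam) + P * (1 + mu) -> Dl <> 0 -> (- P * (3 - X) - (1 + P) * Q) / Dl = t.
Proof.
  intros HD HPD HQ HDl Hnz.
  assert (E : - P * (3 - X) - (1 + P) * Q - t * Dl = 0).
  { transitivity (- (P * D + (s - lam * t))). rewrite HD, HQ, HDl. ring. rewrite HPD. ring. }
  apply Ceq_minus in E. rewrite E. field. auto.
Qed.

Lemma alg_P (X s t P Q D Dl : C) : Dl = (mu - lam) + P * (1 + mu) -> Dl <> 0 ->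
  t = (- P * (3 - X) - (1 + P) * Q) / Dl -> s = Q + mu * t -> D = 3 + s + t - X -> D <> 0 ->
  - (s - lam * t) / D = P.
Proof.
  intros HDl Hnz Ht Hs HD HDnz.
  assert (E : t * Dl = - P * (3 - X) - (1 + P) * Q) by (rewrite Ht; field; auto).
  assert (E2 : s - lam * t + P * D = 0).
  { transitivity (t * Dl - (- P * (3 - X) - (1 + P) * Q)). rewrite HD, Hs, HDl. ring. rewrite E. ring. }
  assert (E3 : - (s - lam * t) = P * D).
  { apply Ceq_minus. transitivity (- (s - lam * t + P * D)). ring. rewrite E2. ring. }
  rewrite E3. field. auto.
Qed.

Lemma root_back (b y : C) : pow_n b m = RtoC 1 -> b <> 0 -> Cmod (y / b - 1) < eps_root m ->
  b * rootm m (1 + (pow_n y m - 1)) = y.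
Proof.
  intros H1 H2 H3.
  assert (E : @eq C (1 + (pow_n y m - 1)) (pow_n (b * (y / b)) m)).
  { replace (b * (y / b)) with y by (field; auto). generalize (pow_n y m). intros. ring. }
  rewrite E. rewrite pow_n_mult, H1.
  assert (E2 : @eq C (1 * pow_n (y / b) m) (pow_n (y / b) m)).
  { generalize (pow_n (y / b) m). intros. ring. }
  rewrite E2.
  rewrite rootm_pow_inv; auto. field. auto.
Qed.

Lemma U0_Dl v : U0 v -> Dlw (Phi v) <> 0.
Proof.
  intros [[[_ H] _] _]. apply (Cball_nz _ (mu - lam)).
  destruct v as [[x y] z]. unfold Dlw, Phi. simpl fst; simpl snd. unfold Pw. simpl fst; simpl snd.
  rewrite Pcomb. replace (mu - lam + Pf (x, y, z) * (1 + mu) - (mu - lam)) with (Pf (x, y, z) * (1 + mu) - 0) by ring.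
  auto.
Qed.

Lemma I1 v : U0 v -> Psi (Phi v) = v.
Proof.
  intros HU. assert (HD := U0_D v HU). assert (HDl := U0_Dl v HU).
  assert (Hy := proj2 (proj1 HU)). assert (Hz := proj2 HU).
  destruct v as [[x y] z].
  assert (HP : Pw (Phi (x, y, z)) = Pf (x, y, z)) by (unfold Pw, Phi; simpl; apply Pcomb).
  assert (HQ : Qw (Phi (x, y, z)) = Qf (x, y, z)) by (unfold Qw, Phi; simpl; apply Qcomb).
  assert (Ht : tw (Phi (x, y, z)) = tf (x, y, z)).
  { unfold tw. rewrite HP, HQ.
    replace (pow_n (fst (fst (Phi (x, y, z)))) m) with (Xf (x, y, z)) by reflexivity.
    apply (alg_t _ (sf (x, y, z)) _ _ _ (Df (x, y, z))); auto.
    unfold Pf. field. auto.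
    unfold Dlw. rewrite HP. auto. }
  assert (Hs : sw (Phi (x, y, z)) = sf (x, y, z)).
  { unfold sw. rewrite Ht, HQ. unfold Qf. ring. }
  unfold Psi. rewrite Hs, Ht. simpl fst; simpl snd. unfold sf, tf. simpl fst; simpl snd.
  rewrite !root_back; auto. apply gamma_nz. apply beta_nz.
Qed.

Lemma pow_root_back (b c : C) : pow_n b m = RtoC 1 -> (0 < fst ((1 + c)%C))%R ->
  pow_n (b * rootm m (1 + c)) m - 1 = c.
Proof.
  intros H1 H2. rewrite pow_n_mult, H1, rootm_pow; auto. ring.
Qed.

Lemma I2 w : W0 w -> Phi (Psi w) = w.
Proof.
  intros HW.
  destruct HW as [[[[_ H1] H2] H3] H4].
  assert (HDl : Dlw w <> 0).
  { apply (Cball_nz _ (mu - lam)). auto. }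
  assert (HD : Dw w <> 0).
  { apply (Cball_nz _ 3). replace (Cmod 3) with 3%R. lra. rewrite Cmod_R, Rabs_pos_eq; lra. }
  destruct w as [[w0 w1] w2].
  assert (Hs : sf (Psi (w0, w1, w2)) = sw (w0, w1, w2)).
  { unfold sf, Psi. simpl fst; simpl snd. apply pow_root_back; auto. apply Cmod_lt1_re; auto. }
  assert (Ht : tf (Psi (w0, w1, w2)) = tw (w0, w1, w2)).
  { unfold tf, Psi. simpl fst; simpl snd. apply pow_root_back; auto. apply Cmod_lt1_re; auto. }
  assert (HDD : Df (Psi (w0, w1, w2)) = Dw (w0, w1, w2)).
  { unfold Df, Dw. rewrite Hs, Ht. reflexivity. }
  assert (HP : Pf (Psi (w0, w1, w2)) = Pw (w0, w1, w2)).
  { unfold Pf. rewrite Hs, Ht, HDD.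
    apply (alg_P (pow_n w0 m) _ _ _ (Qw (w0, w1, w2)) _ (Dlw (w0, w1, w2))); auto. }
  assert (HQ : Qf (Psi (w0, w1, w2)) = Qw (w0, w1, w2)).
  { unfold Qf. rewrite Hs, Ht. unfold sw. ring. }
  unfold Phi. rewrite HP, HQ. unfold Pw, Qw. simpl fst; simpl snd.
  rewrite W1comb, W2comb. reflexivity.
Qed.

Lemma hol_Df v : hol Df v.
Proof. unfold Df, sf, tf, Xf. hol_tac. Qed.

Lemma hol_Pf v : Df v <> 0 -> hol Pf v.
Proof. intros H. unfold Pf. apply hol_div; auto. unfold sf, tf. hol_tac. apply hol_Df. Qed.

Lemma hol_Qf v : hol Qf v.
Proof. unfold Qf, sf, tf. hol_tac. Qed.

Lemma holPhi v : U0 v -> ex_filterdiff Phi (locally v).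
Proof.
  intros HU. assert (HD := U0_D v HU).
  apply (hol_triple (fun v => fst (fst v)) (fun v => (Pf v + Qf v) / 2) (fun v => - Ci * (Pf v - Qf v) / 2)).
  apply hol_p0.
  apply hol_div. apply hol_plus. apply hol_Pf; auto. apply hol_Qf. apply hol_const. apply RtoC_nz; lra.
  apply hol_div. apply hol_mult. apply hol_const. apply hol_minus. apply hol_Pf; auto. apply hol_Qf. apply hol_const. apply RtoC_nz; lra.
Qed.

Lemma hol_Dlw w : hol Dlw w.
Proof. unfold Dlw, Pw. hol_tac. Qed.

Lemma hol_tw w : Dlw w <> 0 -> hol tw w.
Proof. intros H. unfold tw. apply hol_div; auto. unfold Pw, Qw. hol_tac. apply hol_Dlw. Qed.

Lemma hol_sw w : Dlw w <> 0 -> hol sw w.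
Proof. intros H. unfold sw. apply hol_plus. unfold Qw. hol_tac. apply hol_mult. apply hol_const. apply hol_tw; auto. Qed.

Lemma hol_Dw w : Dlw w <> 0 -> hol Dw w.
Proof. intros H. unfold Dw. apply hol_minus. apply hol_plus. apply hol_plus. apply hol_const.
  apply hol_sw; auto. apply hol_tw; auto. hol_tac. Qed.

Lemma W0_Dl w : W0 w -> Dlw w <> 0.
Proof. intros [[[[_ H1] _] _] _]. apply (Cball_nz _ (mu - lam)). auto. Qed.

Lemma holPsi w : W0 w -> ex_filterdiff Psi (locally w).
Proof.
  intros HW. assert (HDl := W0_Dl w HW).
  destruct HW as [[[_ H2] H3] _].
  apply (hol_triple (fun v => fst (fst v)) (fun v => beta * rootm m (1 + sw v)) (fun v => gamma * rootm m (1 + tw v))).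
  apply hol_p0.
  apply hol_mult. apply hol_const. apply (hol_comp (fun v => 1 + sw v) (rootm m)).
  apply hol_plus. apply hol_const. apply hol_sw; auto. apply rootm_derive; auto. apply Cmod_lt1_re; auto.
  apply hol_mult. apply hol_const. apply (hol_comp (fun v => 1 + tw v) (rootm m)).
  apply hol_plus. apply hol_const. apply hol_tw; auto. apply rootm_derive; auto. apply Cmod_lt1_re; auto.
Qed.

Lemma open_U0 : open U0.
Proof.
  unfold U0. apply open_cond. apply open_cond. apply open_cond. apply open_cond.
  apply open_true.
  - intros v _. apply hol_Df.
  - intros v [_ H]. apply hol_mult. apply hol_Pf. apply (Cball_nz _ 3).
    replace (Cmod 3) with 3%R. lra. rewrite Cmod_R, Rabs_pos_eq; lra. apply hol_const.
  - intros v _. apply hol_div. apply hol_p1. apply hol_const. apply beta_nz.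
  - intros v _. apply hol_div. apply hol_p2. apply hol_const. apply gamma_nz.
Qed.

Lemma open_W0 : open W0.
Proof.
  unfold W0. apply open_cond. apply open_cond. apply open_cond. apply open_cond.
  apply open_true.
  - intros v _. apply hol_Dlw.
  - intros v [_ H]. apply hol_sw. apply (Cball_nz _ (mu - lam)). auto.
  - intros v [[_ H] _]. apply hol_tw. apply (Cball_nz _ (mu - lam)). auto.
  - intros v [[[_ H] _] _]. apply hol_Dw. apply (Cball_nz _ (mu - lam)). auto.
Qed.

Lemma pow_n_0 : pow_n (RtoC 0) m = RtoC 0.
Proof. destruct m. lia. simpl. apply Cmult_0_l. Qed.

Lemma Phi_q0 : Phi ((RtoC 0, beta), gamma) = (RtoC 0, RtoC 0, RtoC 0).
Proof.
  unfold Phi, Pf, Qf, Df, sf, tf, Xf. simpl fst; simpl snd. rewrite Hb, Hg, pow_n_0.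
  f_equal; [f_equal|]. all: field; repeat split; apply RtoC_nz; lra.
Qed.

Lemma Cmod0' (a : C) : a = 0 -> Cmod a = 0%R.
Proof. intros ->. apply Cmod_0. Qed.

Lemma U0_q0 : U0 ((RtoC 0, beta), gamma).
Proof.
  assert (He := eps_root_pos m Hm).
  assert (Hml : (0 < Cmod (mu - lam))%R) by (apply Cmod_gt_0; auto).
  unfold U0, Pf, Df, sf, tf, Xf. simpl fst; simpl snd. rewrite Hb, Hg, pow_n_0.
  split; [split; [split; [split|]|]|]; [auto| | | |].
  all: rewrite Cmod0'; [lra|].
  all: field; repeat split; first [apply beta_nz | apply gamma_nz | apply RtoC_nz; lra].
Qed.

Lemma W0_0 : W0 (RtoC 0, RtoC 0, RtoC 0).
Proof.
  assert (Hml : (0 < Cmod (mu - lam))%R) by (apply Cmod_gt_0; auto).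
  assert (Ht : tw (RtoC 0, RtoC 0, RtoC 0) = 0).
  { unfold tw, Dlw, Pw, Qw. simpl fst; simpl snd. rewrite pow_n_0. field.
    replace (mu - lam + (0 + Ci * 0) * (1 + mu)) with (mu - lam) by ring. auto. }
  assert (Hs : sw (RtoC 0, RtoC 0, RtoC 0) = 0).
  { unfold sw. rewrite Ht. unfold Qw. simpl. ring. }
  unfold W0. split; [split; [split; [split|]|]|]; auto.
  - rewrite Cmod0'. lra. unfold Dlw, Pw. simpl. ring.
  - rewrite Hs, Cmod0'. lra. ring.
  - rewrite Ht, Cmod0'. lra. ring.
  - unfold Dw. rewrite Hs, Ht, Cmod0'. lra. simpl. rewrite pow_n_0. ring.
Qed.

Definition C3N := prod_NormedModule C_AbsRing (prod_NormedModule C_AbsRing C_NormedModule C_NormedModule) C_NormedModule.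

Lemma cont_C3 (f : C3 -> C3) (v : C3) : ex_filterdiff (U := C3N) (V := C3N) f (locally v) -> continuous f v.
Proof. intros H. exact (filterdiff_continuous (U := C3N) (V := C3N) f v H). Qed.

Lemma germ_main : germ_Aj (pred m) hfun ((RtoC 0, beta), gamma).
Proof.
  exists (fun v => U0 v /\ W0 (Phi v)), (fun w => W0 w /\ U0 (Psi w)), Phi, Psi, uf.
  split; [|split; [|split; [|split; [|split; [|split; [|split; [|split; [|split; [|split]]]]]]]]].
  - apply (open_pre U0 W0 Phi open_U0 open_W0). intros v Hv. apply cont_C3. apply holPhi; auto.
  - apply (open_pre W0 U0 Psi open_W0 open_U0). intros v Hv. apply cont_C3. apply holPsi; auto.
  - split. apply U0_q0. rewrite Phi_q0. apply W0_0.
  - apply Phi_q0.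
  - intros x [H1 H2]. rewrite I1 by auto. auto.
  - intros w [H1 H2]. rewrite I2 by auto. auto.
  - intros x [H1 H2]. apply holPhi; auto.
  - intros w [H1 H2]. apply holPsi; auto.
  - intros x [H1 H2]. apply ex_fd_CK. change (hol uf x). unfold uf. hol_tac. apply hol_Df.
  - intros x [H1 H2]. unfold uf. apply Cmult_neq_0. apply RtoC_nz; lra. apply U0_D; auto.
  - intros x [H1 H2]. apply I3; auto.
Qed.

End Germ.

Definition lam0 : C := (1/2, sqrt 3 / 2)%R.
Definition mu0 : C := (1/2, - (sqrt 3 / 2))%R.
Lemma s3 : (sqrt 3 * sqrt 3 = 3)%R.
Proof. apply sqrt_sqrt. lra. Qed.
Lemma s3pos : (0 < sqrt 3)%R.
Proof. apply sqrt_lt_R0. lra. Qed.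
Lemma lm1 : lam0 + mu0 = 1.
Proof. unfold lam0, mu0, Cplus, RtoC. simpl. f_equal; field. Qed.
Lemma lm2 : lam0 * mu0 = 1.
Proof. unfold lam0, mu0, Cmult, RtoC. simpl. assert (H := s3). f_equal; nra. Qed.
Lemma lm3 : mu0 - lam0 <> 0.
Proof. unfold lam0, mu0, Cminus, Cplus, Copp, RtoC. simpl. intros H. injection H. intros H1 H2.
  assert (H3 := s3pos). lra. Qed.

Definition zeta (m a : nat) : C := cis (2 * PI * INR a / INR m).

Lemma zeta_pow m a : (1 <= m)%nat -> pow_n (zeta m a) m = RtoC 1.
Proof.
  intros Hm. unfold zeta. rewrite cis_pow.
  assert (INR m <> 0)%R by (apply not_0_INR; lia).
  replace (INR m * (2 * PI * INR a / INR m))%R with (0 + 2 * INR a * PI)%R by (field; auto).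
  unfold cis. rewrite cos_period, sin_period, cos_0, sin_0. reflexivity.
Qed.

Lemma zeta_nz m a : zeta m a <> 0.
Proof.
  unfold zeta, cis. intros H. injection H. intros H1 H2.
  apply (cos_sin_0 (2 * PI * INR a / INR m)). auto.
Qed.

Lemma zeta_inj_aux m a b : (a < b < m)%nat -> zeta m a <> zeta m b.
Proof.
  intros [Hab Hbm] H. unfold zeta, cis in H. injection H. intros Hs Hc.
  set (s := (2 * PI * INR a / INR m)%R) in *. set (t := (2 * PI * INR b / INR m)%R) in *.
  assert (Hcos : cos (t - s) = 1%R).
  { rewrite cos_minus. replace (cos s) with (cos t) by congruence. replace (sin s) with (sin t) by congruence.
    assert (Hh := sin2_cos2 t). unfold Rsqr in Hh. lra. }
  assert (Hsin : sin (t - s) = 0%R).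
  { rewrite sin_minus. replace (cos s) with (cos t) by congruence. replace (sin s) with (sin t) by congruence. ring. }
  assert (HmR : (0 < INR m)%R) by (apply lt_0_INR; lia).
  assert (Hab' : (INR a < INR b)%R) by (apply lt_INR; auto).
  assert (Hbm' : (INR b < INR m)%R) by (apply lt_INR; auto).
  assert (Ha0 : (0 <= INR a)%R) by apply pos_INR.
  assert (HPI := PI_RGT_0).
  assert (Hts : (t - s = 2 * PI * ((INR b - INR a) / INR m))%R) by (unfold t, s; field; apply Rgt_not_eq; lra).
  assert (Hq1 : (0 < (INR b - INR a) / INR m)%R) by (apply Rdiv_lt_0_compat; lra).
  assert (Hq2 : ((INR b - INR a) / INR m < 1)%R).
  { apply Rmult_lt_reg_r with (INR m). auto. unfold Rdiv. rewrite Rmult_assoc, Rinv_l by lra. lra. }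
  assert (H0 : (0 < t - s)%R) by (rewrite Hts; nra).
  assert (H1 : (t - s < 2 * PI)%R) by (rewrite Hts; nra).
  destruct (sin_eq_O_2PI_0 (t - s)) as [E|[E|E]]; try lra.
  rewrite E, cos_PI in Hcos. lra.
Qed.

Lemma zeta_inj m a b : (a < m)%nat -> (b < m)%nat -> zeta m a = zeta m b -> a = b.
Proof.
  intros Ha Hb H. destruct (Nat.lt_total a b) as [H1|[H1|H1]]; auto.
  exfalso. apply (zeta_inj_aux m a b); auto.
  exfalso. apply (zeta_inj_aux m b a); auto.
Qed.

Lemma sum_zero (f : nat -> C) n : (forall a, (a <= n)%nat -> f a = 0) -> sum_n f n = RtoC 0.
Proof.
  induction n; intros H.
  - rewrite sum_O. apply H. lia.
  - rewrite sum_Sn, IHn. rewrite H by lia. change (0 + 0 = RtoC 0). ring.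
    intros a Ha. apply H. lia.
Qed.

Lemma sum_delta (f : nat -> C) n p : (p <= n)%nat -> (forall a, a <> p -> f a = 0) -> @eq C (sum_n f n) (f p).
Proof.
  induction n; intros Hp H.
  - assert (p = 0%nat) by lia. subst. rewrite sum_O. auto.
  - rewrite sum_Sn. destruct (Nat.eq_dec p (S n)).
    + subst. rewrite sum_zero. change (0 + f (S n) = f (S n)). ring.
      intros a Ha. apply H. lia.
    + rewrite IHn by (auto; lia). rewrite (H (S n)) by auto. change (f p + 0 = f p). ring.
Qed.

Definition cterm (p1 p2 p3 : nat) (k : C) (a b e : nat) : C :=
  if (Nat.eqb a p1 && Nat.eqb b p2 && Nat.eqb e p3)%bool then k else 0.

Lemma hp_single d p1 p2 p3 q k x : (p1 + p2 + p3 + q = d)%nat ->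
  hp_eval d (cterm p1 p2 p3 k) x =
  let '(x0, x1, x2, x3) := x in k * pow_n x0 p1 * pow_n x1 p2 * pow_n x2 p3 * pow_n x3 q.
Proof.
  intros Hd. destruct x as [[[x0 x1] x2] x3]. unfold hp_eval.
  rewrite (sum_delta _ d p1) by (try lia; intros a Ha; apply sum_zero; intros b _; apply sum_zero;
     intros e _; unfold cterm; destruct (a + b + e <=? d)%nat; auto;
     replace (a =? p1)%nat with false by (symmetry; apply Nat.eqb_neq; auto); simpl; ring).
  rewrite (sum_delta _ d p2) by (try lia; intros b Hb; apply sum_zero; 
     intros e _; unfold cterm; destruct (p1 + b + e <=? d)%nat; auto; rewrite Nat.eqb_refl;
     replace (b =? p2)%nat with false by (symmetry; apply Nat.eqb_neq; auto); simpl; ring).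
  rewrite (sum_delta _ d p3) by (try lia; intros e He; 
     unfold cterm; destruct (p1 + p2 + e <=? d)%nat; auto; rewrite !Nat.eqb_refl;
     replace (e =? p3)%nat with false by (symmetry; apply Nat.eqb_neq; auto); simpl; ring).
  unfold cterm. rewrite !Nat.eqb_refl. simpl.
  replace (p1 + p2 + p3 <=? d)%nat with true by (symmetry; apply Nat.leb_le; lia).
  replace (d - p1 - p2 - p3)%nat with q by lia. reflexivity.
Qed.

Lemma hp_lin d (c c1 c2 : nat -> nat -> nat -> C) x :
  (forall a b e, c a b e = c1 a b e + c2 a b e) ->
  hp_eval d c x = hp_eval d c1 x + hp_eval d c2 x.
Proof.
  intros H. destruct x as [[[x0 x1] x2] x3]. unfold hp_eval.
  etransitivity; [|apply (sum_n_plus (G := C_AbelianMonoid))]. apply sum_n_ext. intros a.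
  etransitivity; [|apply (sum_n_plus (G := C_AbelianMonoid))]. apply sum_n_ext. intros b.
  etransitivity; [|apply (sum_n_plus (G := C_AbelianMonoid))]. apply sum_n_ext. intros e.
  rewrite H. destruct (a + b + e <=? d)%nat.
  - match goal with |- ?l = plus ?u ?v => change (@eq C l (Cplus u v)) end. ring.
  - match goal with |- ?l = plus ?u ?v => change (@eq C l (Cplus u v)) end. ring.
Qed.

Definition term := (nat * nat * nat * nat * C)%type.

Fixpoint cfl (l : list term) (a b e : nat) : C :=
  match l with
  | nil => 0
  | (p1, p2, p3, q, k) :: l' => cterm p1 p2 p3 k a b e + cfl l' a b e
  end.

Fixpoint evl (l : list term) (x : C4) : C :=
  match l with
  | nil => 0
  | (p1, p2, p3, q, k) :: l' =>
    (let '(x0, x1, x2, x3) := x in k * pow_n x0 p1 * pow_n x1 p2 * pow_n x2 p3 * pow_n x3 q) + evl l' x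
  end.

Fixpoint okl (d : nat) (l : list term) : Prop :=
  match l with
  | nil => True
  | (p1, p2, p3, q, k) :: l' => (p1 + p2 + p3 + q = d)%nat /\ okl d l'
  end.

Lemma hp_list d l x : okl d l -> hp_eval d (cfl l) x = evl l x.
Proof.
  induction l as [|[[[[p1 p2] p3] q] k] l IH]; intros H.
  - destruct x as [[[x0 x1] x2] x3]. unfold hp_eval. simpl.
    apply sum_zero. intros. apply sum_zero. intros. apply sum_zero. intros.
    destruct (_ <=? d)%nat; auto. ring.
  - destruct H as [H1 H2]. simpl cfl.
    rewrite (hp_lin d _ (cterm p1 p2 p3 k) (cfl l)) by auto.
    rewrite (hp_single d p1 p2 p3 q) by auto. rewrite IH by auto. reflexivity.
Qed.

Import ListNotations.

Definition Lpoly (m : nat) : list term :=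
  [ ((2*m)%nat, 0%nat, 0%nat, 0%nat, RtoC (-2)); (0%nat, (2*m)%nat, 0%nat, 0%nat, RtoC (-2)); (0%nat, 0%nat, (2*m)%nat, 0%nat, RtoC (-2)); (0%nat, 0%nat, 0%nat, (2*m)%nat, RtoC (-2));
    (m, m, 0%nat, 0%nat, RtoC 2); (m, 0%nat, m, 0%nat, RtoC 2); (m, 0%nat, 0%nat, m, RtoC 2); (0%nat, m, m, 0%nat, RtoC 2);
    (0%nat, m, 0%nat, m, RtoC 2); (0%nat, 0%nat, m, m, RtoC 2) ].

Definition Fpoly (m : nat) (x : C4) : C :=
  let '(x0, x1, x2, x3) := x in
  let a := pow_n x0 m in let b := pow_n x1 m in let c := pow_n x2 m in let d := pow_n x3 m in
  -2 * (a * a + b * b + c * c + d * d) + 2 * (a * b + a * c + a * d + b * c + b * d + c * d).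

Lemma pow2m (x : C) m : pow_n x (2 * m) = pow_n x m * pow_n x m.
Proof. replace (2 * m)%nat with (m + m)%nat by lia. exact (pow_n_plus x m m). Qed.

Lemma pow_n_O' (x : C) : pow_n x 0 = RtoC 1.
Proof. reflexivity. Qed.

Lemma hp_F m x : hp_eval (2 * m) (cfl (Lpoly m)) x = Fpoly m x.
Proof.
  rewrite hp_list.
  2:{ unfold Lpoly. cbn [okl]. repeat split; lia. }
  destruct x as [[[x0 x1] x2] x3]. unfold Lpoly. cbn [evl]. unfold Fpoly.
  rewrite !pow2m, !pow_n_O'. cbv zeta.
  generalize (pow_n x0 m) (pow_n x1 m) (pow_n x2 m) (pow_n x3 m). intros a b c d.
  match goal with |- ?l = ?r => change (@eq C l r) end.
  ring.
Qed.

Lemma pow_n_1 m : pow_n (RtoC 1) m = RtoC 1.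
Proof. induction m. reflexivity. change (1 * pow_n (RtoC 1) m = RtoC 1). rewrite IHm. ring. Qed.

Definition sig1 (y : C3) : C3 := ((snd (fst y), fst (fst y)), snd y).
Definition sig2 (y : C3) : C3 := ((snd y, fst (fst y)), snd (fst y)).
Definition sig2' (y : C3) : C3 := ((snd (fst y), snd y), fst (fst y)).

Ltac Fsym := 
  match goal with y : C3 |- _ => destruct y as [[? ?] ?] end;
  unfold Fpoly, hfun, sig1, sig2, chart; simpl fst; simpl snd; rewrite ?pow_n_1; cbv zeta;
  repeat match goal with |- context [pow_n ?x ?n] => generalize (pow_n x n); intro end;
  match goal with |- ?l = ?r => change (@eq C l r) end; ring.

Lemma F0 m y : Fpoly m (chart 3 y) = hfun m y.
Proof. Fsym. Qed.
Lemma F1 m y : Fpoly m (chart 3 y) = hfun m (sig1 y).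
Proof. Fsym. Qed.
Lemma F2 m y : Fpoly m (chart 3 y) = hfun m (sig2 y).
Proof. Fsym. Qed.
Lemma F3 m y : Fpoly m (chart 2 y) = hfun m (sig2 y).
Proof. Fsym. Qed.

Lemma germ_ext j (f g : C3 -> C) q : (forall y, g y = f y) -> germ_Aj j f q -> germ_Aj j g q.
Proof.
  intros Hfg (U & W & Phi & Psi & u & H1 & H2 & H3 & H4 & H5 & H6 & H7 & H8 & H9 & H10 & H11).
  exists U, W, Phi, Psi, u. repeat (split; auto).
  intros x Hx. rewrite Hfg. auto.
Qed.

Lemma germ_perm j (h : C3 -> C) (q : C3) (pi pi' : C3 -> C3) :
  is_linear (U := C3N) (V := C3N) pi -> is_linear (U := C3N) (V := C3N) pi' ->
  (forall y, pi' (pi y) = y) -> (forall y, pi (pi' y) = y) ->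
  germ_Aj j h (pi q) -> germ_Aj j (fun y => h (pi y)) q.
Proof.
  intros Hl Hl' E1 E2 (U & W & Phi & Psi & u & H1 & H2 & H3 & H4 & H5 & H6 & H7 & H8 & H9 & H10 & H11).
  assert (Hc : forall x, continuous pi x).
  { intros x. apply cont_C3. apply ex_filterdiff_linear. auto. }
  exists (fun y => U (pi y)), W, (fun y => Phi (pi y)), (fun w => pi' (Psi w)), (fun y => u (pi y)).
  split; [|split; [|split; [|split; [|split; [|split; [|split; [|split; [|split; [|split]]]]]]]]].
  - apply (open_comp pi U). intros x _. apply Hc. auto.
  - auto.
  - auto.
  - auto.
  - intros x Hx. destruct (H5 _ Hx) as [A B]. split; auto. rewrite B. auto.
  - intros w Hw. destruct (H6 _ Hw) as [A B]. rewrite E2. auto.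
  - intros x Hx. apply (ex_filterdiff_comp' (U := C3N) (V := C3N) pi Phi x).
    apply ex_filterdiff_linear; auto. apply H7. auto.
  - intros w Hw. apply (ex_filterdiff_comp' (U := C3N) (V := C3N) (W := C3N) Psi pi' w).
    apply H8; auto. apply ex_filterdiff_linear; auto.
  - intros x Hx. apply (ex_filterdiff_comp' (U := C3N) (V := C3N) pi u x).
    apply ex_filterdiff_linear; auto. apply H9. auto.
  - intros x Hx. apply H10. auto.
  - intros x Hx. apply H11. auto.
Qed.

Lemma lin_sig1 : is_linear (U := C3N) (V := C3N) sig1.
Proof.
  unfold sig1. apply (is_linear_prod (U := prod_NormedModule C_AbsRing C_NormedModule C_NormedModule) (V := C_NormedModule)).
  apply is_linear_prod.
  apply (is_linear_comp (fun t : C3N => fst t) (fun t => snd t)). apply is_linear_fst. apply is_linear_snd.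
  apply (is_linear_comp (fun t : C3N => fst t) (fun t => fst t)). apply is_linear_fst. apply is_linear_fst.
  apply is_linear_snd.
Qed.

Lemma lin_sig2 : is_linear (U := C3N) (V := C3N) sig2.
Proof.
  unfold sig2. apply (is_linear_prod (U := prod_NormedModule C_AbsRing C_NormedModule C_NormedModule) (V := C_NormedModule)).
  apply is_linear_prod.
  apply is_linear_snd.
  apply (is_linear_comp (fun t : C3N => fst t) (fun t => fst t)). apply is_linear_fst. apply is_linear_fst.
  apply (is_linear_comp (fun t : C3N => fst t) (fun t => snd t)). apply is_linear_fst. apply is_linear_snd.
Qed.

Lemma lin_sig2' : is_linear (U := C3N) (V := C3N) sig2'.
Proof.
  unfold sig2'. apply (is_linear_prod (U := prod_NormedModule C_AbsRing C_NormedModule C_NormedModule) (V := C_NormedModule)).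
  apply is_linear_prod.
  apply (is_linear_comp (fun t : C3N => fst t) (fun t => snd t)). apply is_linear_fst. apply is_linear_snd.
  apply is_linear_snd.
  apply (is_linear_comp (fun t : C3N => fst t) (fun t => fst t)). apply is_linear_fst. apply is_linear_fst.
Qed.

Lemma sig1_inv y : sig1 (sig1 y) = y.
Proof. destruct y as [[a b] c]. reflexivity. Qed.
Lemma sig2_inv y : sig2' (sig2 y) = y.
Proof. destruct y as [[a b] c]. reflexivity. Qed.
Lemma sig2_inv' y : sig2 (sig2' y) = y.
Proof. destruct y as [[a b] c]. reflexivity. Qed.

Definition pt (m k a b : nat) : C4 :=
  match k with
  | 0%nat => (RtoC 0, zeta m a, zeta m b, RtoC 1)
  | 1%nat => (zeta m a, RtoC 0, zeta m b, RtoC 1)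
  | 2%nat => (zeta m a, zeta m b, RtoC 0, RtoC 1)
  | _ => (zeta m a, zeta m b, RtoC 1, RtoC 0)
  end.

Lemma one_nz : RtoC 1 <> RtoC 0.
Proof. apply RtoC_nz. lra. Qed.

Lemma scal4_1 (p : C4) : scal4 (/ RtoC 1) p = p.
Proof. destruct p as [[[a b] c] d]. unfold scal4. f_equal; [f_equal; [f_equal|]|]; field; apply one_nz. Qed.

Lemma germ_m j a b : germ_Aj j (hfun (j + 1)) ((RtoC 0, zeta (j + 1) a), zeta (j + 1) b).
Proof.
  assert (H := germ_main (j + 1) (zeta (j + 1) a) (zeta (j + 1) b) lam0 mu0 ltac:(lia)
    (zeta_pow (j + 1) a ltac:(lia)) (zeta_pow (j + 1) b ltac:(lia)) lm1 lm2 lm3).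
  replace (pred (j + 1)) with j in H by lia. exact H.
Qed.

Lemma pt_Aj j k a b : (k < 4)%nat ->
  pt (j + 1) k a b <> zero4 /\ is_Aj_point j (2 * (j + 1)) (cfl (Lpoly (j + 1))) (pt (j + 1) k a b).
Proof.
  intros Hk. split.
  { unfold pt, zero4, RtoC. destruct k as [|[|[|k]]]; intros H; injection H; intros; lra. }
  destruct k as [|[|[|[|k]]]]; try lia.
  - exists 3%nat. split. lia. split. simpl. apply one_nz.
    unfold pt. simpl coord4. rewrite scal4_1. simpl dechart.
    apply (germ_ext j (hfun (j + 1))). intros y. rewrite hp_F. apply F0. apply germ_m.
  - exists 3%nat. split. lia. split. simpl. apply one_nz.
    unfold pt. simpl coord4. rewrite scal4_1. simpl dechart.
    apply (germ_ext j (fun y => hfun (j + 1) (sig1 y))). intros y. rewrite hp_F. apply F1.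
    apply (germ_perm j (hfun (j + 1)) _ sig1 sig1 lin_sig1 lin_sig1 sig1_inv sig1_inv). apply germ_m.
  - exists 3%nat. split. lia. split. simpl. apply one_nz.
    unfold pt. simpl coord4. rewrite scal4_1. simpl dechart.
    apply (germ_ext j (fun y => hfun (j + 1) (sig2 y))). intros y. rewrite hp_F. apply F2.
    apply (germ_perm j (hfun (j + 1)) _ sig2 sig2' lin_sig2 lin_sig2' sig2_inv sig2_inv'). apply germ_m.
  - exists 2%nat. split. lia. split. simpl. apply one_nz.
    unfold pt. simpl coord4. rewrite scal4_1. simpl dechart.
    apply (germ_ext j (fun y => hfun (j + 1) (sig2 y))). intros y. rewrite hp_F. apply F3.
    apply (germ_perm j (hfun (j + 1)) _ sig2 sig2' lin_sig2 lin_sig2' sig2_inv sig2_inv'). apply germ_m.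
Qed.

Lemma pt_inj m k k' a a' b b' l : (k < 4)%nat -> (k' < 4)%nat -> (a < m)%nat -> (a' < m)%nat ->
  (b < m)%nat -> (b' < m)%nat ->
  pt m k' a' b' = scal4 l (pt m k a b) -> k = k' /\ a = a' /\ b = b'.
Proof.
  intros Hk Hk' Ha Ha' Hb Hb' H.
  assert (E0 := f_equal (coord4 0) H). assert (E1 := f_equal (coord4 1) H).
  assert (E2 := f_equal (coord4 2) H). assert (E3 := f_equal (coord4 3) H).
  clear H.
  destruct k as [|[|[|[|k]]]]; try lia; destruct k' as [|[|[|[|k']]]]; try lia;
  cbn [pt scal4 coord4] in E0, E1, E2, E3;
  try rewrite Cmult_0_r in E0; try rewrite Cmult_0_r in E1; try rewrite Cmult_0_r in E2; try rewrite Cmult_0_r in E3;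
  first [
    exfalso; match goal with
             | E : zeta _ _ = RtoC 0 |- _ => exact (zeta_nz _ _ E)
             | E : RtoC 1 = RtoC 0 |- _ => exact (one_nz E)
             end
  | match goal with E : RtoC 1 = l * RtoC 1 |- _ => rewrite Cmult_1_r in E; subst l end;
    try rewrite Cmult_1_l in E0; try rewrite Cmult_1_l in E1; try rewrite Cmult_1_l in E2; try rewrite Cmult_1_l in E3;
    split; [lia| split; apply (zeta_inj m); auto; congruence] ].
Qed.

Lemma cf_000 m : (1 <= m)%nat -> cfl (Lpoly m) 0 0 0 <> 0.
Proof.
  intros Hm.
  assert (E1 : (0 =? m)%nat = false) by (apply Nat.eqb_neq; lia).
  assert (E2 : (0 =? 2 * m)%nat = false) by (apply Nat.eqb_neq; lia).
  unfold Lpoly. cbn [cfl]. unfold cterm. rewrite ?E1, ?E2. cbn [Nat.eqb andb].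
  replace (0 + (0 + (0 + (RtoC (-2) + (0 + (0 + (0 + (0 + (0 + (0 + 0))))))))))
   with (RtoC (-2)) by ring.
  apply RtoC_nz. lra.
Qed.

Definition pidx (m i : nat) : C4 :=
  pt m (i / (m * m)) ((i mod (m * m)) / m) ((i mod (m * m)) mod m).

Lemma idx_bounds (m i : nat) : (1 <= m)%nat -> (i < 4 * (m * m))%nat ->
  (i / (m * m) < 4 /\ (i mod (m * m)) / m < m /\ (i mod (m * m)) mod m < m)%nat.
Proof.
  intros Hm Hi. assert (Hmm : (0 < m * m)%nat) by nia.
  split; [|split].
  - apply (Nat.Div0.div_lt_upper_bound i (m * m) 4). nia.
  - apply (Nat.Div0.div_lt_upper_bound (i mod (m * m)) m m). apply Nat.mod_upper_bound. lia.
  - apply Nat.mod_upper_bound. lia.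
Qed.

Lemma idx_inj (m i i' : nat) : (1 <= m)%nat ->
  (i / (m * m) = i' / (m * m))%nat -> ((i mod (m * m)) / m = (i' mod (m * m)) / m)%nat ->
  ((i mod (m * m)) mod m = (i' mod (m * m)) mod m)%nat -> i = i'.
Proof.
  intros Hm H1 H2 H3.
  rewrite (Nat.div_mod_eq i (m * m)), (Nat.div_mod_eq i' (m * m)).
  rewrite (Nat.div_mod_eq (i mod (m * m)) m), (Nat.div_mod_eq (i' mod (m * m)) m).
  rewrite H1, H2, H3. reflexivity.
Qed.

Theorem mainTheorem8 :
  forall j : nat,
  exists (c : nat -> nat -> nat -> C) (p : nat -> C4),
    hp_nonzero (2 * (j + 1)) c /\
    (forall i, (i < 4 * (j + 1) ^ 2)%nat ->
       p i <> zero4 /\ is_Aj_point j (2 * (j + 1)) c (p i)) /\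
    (forall i i', (i < 4 * (j + 1) ^ 2)%nat -> (i' < 4 * (j + 1) ^ 2)%nat ->
       i <> i' -> proj_distinct (p i) (p i')).
Proof.
  intros j.
  assert (Hm : (1 <= j + 1)%nat) by lia.
  exists (cfl (Lpoly (j + 1))), (pidx (j + 1)).
  rewrite Nat.pow_2_r.
  split; [|split].
  - exists 0%nat, 0%nat, 0%nat. split. lia. apply cf_000. auto.
  - intros i Hi. destruct (idx_bounds (j + 1) i Hm Hi) as [H1 [H2 H3]].
    unfold pidx. apply pt_Aj. auto.
  - intros i i' Hi Hi' Hne [l Hl].
    destruct (idx_bounds (j + 1) i Hm Hi) as [H1 [H2 H3]].
    destruct (idx_bounds (j + 1) i' Hm Hi') as [H1' [H2' H3']].
    unfold pidx in Hl.
    destruct (pt_inj _ _ _ _ _ _ _ _ H1 H1' H2 H2' H3 H3' Hl) as [E1 [E2 E3]].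
    apply Hne. apply (idx_inj (j + 1)); auto.
Qed.
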